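(* Let $x^*\in\mathbb{R}^n$ satisfy $Ax^*=b$, and let $x\in\mathbb{R}^n$ with $P(x)\neq x$. Then the function $s\mapsto\|(1-s)x+sP(x)-x^*\|^2$ on $\mathbb{R}$ has a unique minimizer \[s^*=\frac12+\frac{\|r(x)\|^2}{2\|P(x)-x\|^2},\] and \[\|x-x^*\|^2-\|(1-s^* )x+s^*P(x)-x^*\|^2=\frac{(\|r(x)\|^2+\|P(x)-x\|^2)^2}{4\|P(x)-x\|^2}.\]
   Context: Let $A=(a_1,\ldots,a_m)^T\in\mathbb{R}^{m\times n}$ with rows $a_j\in\mathbb{R}^n\setminus\{0\}$, and let $b\in\mathbb{R}^m$ lie in the range of $A$. Norms are Euclidean. For $j=1,\ldots,m$ define the projectors $P_j:\mathbb{R}^n\to\mathbb{R}^n$, $P_j(x)=\big(I-\frac{a_ja_j^T}{\|a_j\|^2}\big)x+\frac{b_j}{\|a_j\|^2}a_j$ (the orthogonal projection onto $\{z:a_j^Tz=b_j\}$), and the Kaczmarz cycle $P=P_m\circ\cdots\circ P_1$. The residual $r:\mathbb{R}^n\to\mathbb{R}^m$ is defined by $r_1(x)=(a_1^Tx-b_1)/\|a_1\|$ and $r_j(x)=(a_j^T(P_{j-1}\circ\cdots\circ P_1)(x)-b_j)/\|a_j\|$ for $j=2,\ldots,m$. *)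

(* Defs.v *)
From HB Require Import structures.
From mathcomp Require Import all_boot all_order all_algebra.
Set Implicit Arguments. Unset Strict Implicit. Unset Printing Implicit Defensive.
Import Order.TTheory GRing.Theory Num.Theory.
Local Open Scope ring_scope.

Section Kaczmarz.
Variables (R : rcfType) (m n : nat).

Definition dotv (u v : 'cV[R]_n) : R := \sum_(i < n) u i 0 * v i 0.
Definition sqnorm {k : nat} (v : 'cV[R]_k) : R := \sum_(i < k) (v i 0) ^+ 2.
Definition normv {k : nat} (v : 'cV[R]_k) : R := Num.sqrt (sqnorm v).

Definition arow (A : 'M[R]_(m, n)) (j : 'I_m) : 'cV[R]_n := (row j A)^T.

Definition proj (A : 'M[R]_(m, n)) (b : 'cV[R]_m) (j : 'I_m) (x : 'cV[R]_n)
  : 'cV[R]_n :=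
  x - (dotv (arow A j) x / sqnorm (arow A j)) *: arow A j
    + (b j 0 / sqnorm (arow A j)) *: arow A j.

(* P_{k-1} o ... o P_1 applied to x (indices 0-based: first k projectors) *)
Definition Ppart (A : 'M[R]_(m, n)) (b : 'cV[R]_m) (k : nat) (x : 'cV[R]_n)
  : 'cV[R]_n :=
  foldl (fun y j => proj A b j y) x (take k (enum 'I_m)).

Definition kcycle (A : 'M[R]_(m, n)) (b : 'cV[R]_m) (x : 'cV[R]_n) : 'cV[R]_n :=
  Ppart A b m x.

Definition resid (A : 'M[R]_(m, n)) (b : 'cV[R]_m) (x : 'cV[R]_n) : 'cV[R]_m :=
  \col_(j < m) ((dotv (arow A j) (Ppart A b j x) - b j 0) / normv (arow A j)).

End Kaczmarz.

(* Main.v *)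
Require Import Defs.
From HB Require Import structures.
From mathcomp Require Import all_boot all_order all_algebra.
From mathcomp Require Import ring lra.
Import Order.TTheory GRing.Theory Num.Theory.
Local Open Scope ring_scope.

Lemma sum_sq_lin (R : rcfType) (k : nat) (u d : 'I_k -> R) (s : R) :
  \sum_(i < k) (u i + s * d i) ^+ 2 =
  \sum_(i < k) u i ^+ 2 + 2 * s * (\sum_(i < k) u i * d i)
  + s ^+ 2 * \sum_(i < k) d i ^+ 2.
Proof.
rewrite mulr_sumr mulr_sumr -!big_split /=; apply: eq_bigr => i _; ring.
Qed.

Lemma sqnorm_ge0 (R : rcfType) k (v : 'cV[R]_k) : 0 <= sqnorm v.
Proof. by apply: sumr_ge0 => i _; rewrite sqr_ge0. Qed.

Lemma sqnorm_gt0 (R : rcfType) k (v : 'cV[R]_k) : v != 0 -> 0 < sqnorm v.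
Proof.
move=> hv; rewrite lt_def sqnorm_ge0 andbT; apply/eqP => h0.
move/eqP: hv; apply; apply/matrixP => i j; rewrite (ord1 j) mxE.
have := @psumr_eq0P R _ predT (fun i => v i 0 ^+ 2) (fun i _ => sqr_ge0 _) h0 i isT.
by move/eqP; rewrite sqrf_eq0 => /eqP.
Qed.

Arguments sqnorm_gt0 {R k v}.
Arguments sqnorm_ge0 {R k v}.

Lemma proj_step (R : rcfType) (m n : nat) (A : 'M[R]_(m, n)) (b : 'cV[R]_m)
  (xs : 'cV[R]_n) (hxs : A *m xs = b)
  (hrows : forall j : 'I_m, arow A j != 0) (j : 'I_m) (y : 'cV[R]_n) :
  sqnorm (y - xs) - sqnorm (proj A b j y - xs) =
  ((dotv (arow A j) y - b j 0) / normv (arow A j)) ^+ 2.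
Proof.
set a := arow A j.
have hS : 0 < sqnorm a by exact: (sqnorm_gt0 (hrows j)).
set c := (dotv a y - b j 0) / sqnorm a.
have hab : \sum_(i < n) (y i 0 - xs i 0) * a i 0 = dotv a y - b j 0.
  have : (A *m xs) j 0 = b j 0 by rewrite hxs.
  rewrite mxE => <-; rewrite /dotv -sumrB; apply: eq_bigr => i _.
  rewrite /a /arow !mxE; ring.
have e : sqnorm (proj A b j y - xs) =
  \sum_(i < n) ((y i 0 - xs i 0) + (- c) * a i 0) ^+ 2.
  rewrite /sqnorm; apply: eq_bigr => i _. rewrite /proj !mxE /c -/a.
  move: hS; move: (sqnorm a) (dotv a y) => S d hS'. field. by rewrite gt_eqF.
rewrite e sum_sq_lin hab.
have -> : sqnorm (y - xs) = \sum_(i < n) (y i 0 - xs i 0) ^+ 2.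
  by apply: eq_bigr => i _; rewrite !mxE.
rewrite -/(sqnorm a) expr_div_n /normv sqr_sqrtr ?sqnorm_ge0 // /c.
move: hS; move: (sqnorm a) (dotv a y) (\sum_(i < n) (y i 0 - xs i 0) ^+ 2) (\sum_(i < n) a i 0 ^+ 2) => S d Q T hS'.
field; by rewrite gt_eqF.
Qed.

Lemma Ppart_step (R : rcfType) (m n : nat) (A : 'M[R]_(m, n)) (b : 'cV[R]_m) (k : nat) (hk : (k < m)%N) (x : 'cV[R]_n) :
  Ppart A b k.+1 x = proj A b (Ordinal hk) (Ppart A b k x).
Proof.
rewrite /Ppart (take_nth (Ordinal hk)) ?size_enum_ord // foldl_rcons.
congr proj; apply: val_inj => /=; by rewrite nth_enum_ord.
Qed.

Lemma Ppart_sum (R : rcfType) (m n : nat) (A : 'M[R]_(m, n)) (b : 'cV[R]_m)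
  (xs : 'cV[R]_n) (hxs : A *m xs = b)
  (hrows : forall j : 'I_m, arow A j != 0) (x : 'cV[R]_n) (k : nat) : (k <= m)%N ->
  sqnorm (x - xs) - sqnorm (Ppart A b k x - xs) =
  \sum_(j <- take k (enum 'I_m)) (resid A b x) j 0 ^+ 2.
Proof.
elim: k => [|k IH] hk.
  by rewrite take0 big_nil /Ppart take0 /= subrr.
have hk' : (k < m)%N by [].
rewrite (take_nth (Ordinal hk')); last by rewrite size_enum_ord.
rewrite -cats1 big_cat big_seq1.
rewrite -IH; last exact: ltnW.
rewrite Ppart_step.
have -> : nth (Ordinal hk') (enum 'I_m) k = Ordinal hk'.
  by apply: val_inj => /=; rewrite nth_enum_ord.
rewrite mxE -(@proj_step R m n A b xs hxs hrows (Ordinal hk') (Ppart A b k x)).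
move: (sqnorm (x - xs)) (sqnorm (Ppart A b k x - xs)) (sqnorm (proj A b (Ordinal hk') (Ppart A b k x) - xs)) => u v w.
by rewrite /= addrA subrK.
Qed.


Theorem theorem4 (R : rcfType) (m n : nat) (A : 'M[R]_(m, n)) (b : 'cV[R]_m)
  (hrows : forall j : 'I_m, arow A j != 0)
  (hb : exists z : 'cV[R]_n, A *m z = b)
  (xs : 'cV[R]_n) (hxs : A *m xs = b)
  (x : 'cV[R]_n) (hPx : kcycle A b x != x) :
  let f := fun s : R => sqnorm ((1 - s) *: x + s *: kcycle A b x - xs) in
  let sstar := 1 / 2 + sqnorm (resid A b x) / (2 * sqnorm (kcycle A b x - x)) in
  (forall s : R, s != sstar -> f sstar < f s) /\
  sqnorm (x - xs) - f sstar =
    (sqnorm (resid A b x) + sqnorm (kcycle A b x - x)) ^+ 2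
      / (4 * sqnorm (kcycle A b x - x)).
Proof.
move=> f sstar.
set P := kcycle A b x.
have hr : sqnorm (x - xs) - sqnorm (P - xs) = sqnorm (resid A b x).
  rewrite /P /kcycle (@Ppart_sum R m n A b xs hxs hrows x m (leqnn m)).
  rewrite take_oversize; last by rewrite size_enum_ord.
  rewrite big_enum /sqnorm. by apply: eq_bigl => i.
have hD : 0 < sqnorm (P - x) by apply: sqnorm_gt0; rewrite subr_eq0.
set Q := sqnorm (x - xs) in hr *.
set D := sqnorm (P - x) in hD sstar *.
set rr := sqnorm (resid A b x) in hr sstar *.
set L := \sum_(i < n) (x i 0 - xs i 0) * (P i 0 - x i 0).
have hf : forall s, f s = Q + 2 * s * L + s ^+ 2 * D.
  move=> s; rewrite /f /sqnorm.
  have -> : \sum_(i < n) (((1 - s) *: x + s *: P - xs) i 0) ^+ 2 =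
     \sum_(i < n) ((x i 0 - xs i 0) + s * (P i 0 - x i 0)) ^+ 2.
    by apply: eq_bigr => i _; rewrite !mxE; congr (_ ^+ 2); ring.
  rewrite sum_sq_lin; congr (_ + _ + _ * _).
    by apply: eq_bigr => i _; rewrite !mxE.
  by apply: eq_bigr => i _; rewrite !mxE.
have hf1 : sqnorm (P - xs) = Q + 2 * L + D.
  have := hf 1; rewrite /f subrr scale0r add0r scale1r => ->; ring.
have hL : 2 * L = - rr - D by rewrite -hr hf1; ring.
have hss : sstar = (rr + D) / (2 * D) by rewrite /sstar; field; rewrite gt_eqF.
have key : forall s, f s - f sstar = D * (s - sstar) ^+ 2.
  move=> s; rewrite !hf hss.
  have -> : Q + 2 * s * L + s ^+ 2 * D = Q + s * (2 * L) + s ^+ 2 * D by ring.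
  have -> : Q + 2 * ((rr + D) / (2 * D)) * L + ((rr + D) / (2 * D)) ^+ 2 * D
      = Q + ((rr + D) / (2 * D)) * (2 * L) + ((rr + D) / (2 * D)) ^+ 2 * D by ring.
  rewrite hL; field; by rewrite gt_eqF.
split.
  move=> s hs; rewrite -subr_gt0 key; apply: mulr_gt0 => //.
  by rewrite lt0r sqr_ge0 andbT sqrf_eq0 subr_eq0.
have := key 0; rewrite /f subr0 scale1r scale0r addr0 -/Q => hk.
have hQ : Q = f 0 by rewrite /f subr0 scale1r scale0r addr0.
rewrite hQ; have -> : f 0 - f sstar = D * (0 - sstar) ^+ 2 by apply: key.
rewrite hss; field; by rewrite gt_eqF.
Qed.
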